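(* Let $0<\alpha<1$, $b>0$, $c>0$ with $L=b+c<1$, and define for integers $\gamma\ge 1$ $$S_{inf}(\gamma)=\frac{1-\alpha^{\gamma+1}}{(1+\gamma L)(1-\alpha)}.$$ Let $$\gamma_0=\frac{1}{\ln\alpha}\left[W_{-1}\!\left(-\frac{1}{e}\,\alpha^{\frac{1}{L}-1}\right)+1\right]-\frac{1}{L},$$ where $W_{-1}$ is the $-1$ branch of the Lambert $W$ function (the inverse of $w\mapsto we^{w}$ on $(-\infty,-1]$). Then a maximizer $\gamma^*$ of $S_{inf}$ over integers $\gamma\ge 1$ satisfies: if $\gamma_0>1$, then $\gamma^*\in\{\lfloor\gamma_0\rfloor,\lceil\gamma_0\rceil\}$; otherwise $\gamma^*=1$.
   Context: $S_{inf}(\gamma)$ is the speedup ratio of distributed speculative decoding with draft length $\gamma$, acceptance rate $\alpha$, and $L$ the per-draft-token cost (SLM inference plus uplink transmission of the draft distribution) relative to one LLM run. Note that $L<1$ ensures the argument $-\frac1e\alpha^{1/L-1}$ lies in $(-1/e,0)$, where $W_{-1}$ is real-valued. *)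

(* Defs.v *)
From HB Require Import structures.
From mathcomp Require Import all_boot all_order all_algebra.
From mathcomp Require Import all_classical all_reals all_analysis.
Set Implicit Arguments. Unset Strict Implicit. Unset Printing Implicit Defensive.
Import Order.TTheory GRing.Theory Num.Theory.
Local Open Scope classical_set_scope.
Local Open Scope ring_scope.

(* Lambert W, branch -1: the (unique, for -1/e <= x < 0) w <= -1 with w e^w = x.
   Outside that domain the value is an unspecified default. *)
Definition LambertWm1 (R : realType) (x : R) : R :=
  xget 0 [set w : R | w <= -1 /\ w * expR w = x].

Definition S_inf (R : realType) (alpha L : R) (g : nat) : R :=
  (1 - alpha ^+ g.+1) / ((1 + g%:R * L) * (1 - alpha)).

Definition gamma0 (R : realType) (alpha L : R) : R :=
  (LambertWm1 (- (expR 1)^-1 * alpha `^ (L^-1 - 1)) + 1) / ln alpha - L^-1.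

(* Main.v *)
From HB Require Import structures.
From mathcomp Require Import all_boot all_order all_algebra.
From mathcomp Require Import all_classical all_reals all_analysis.
From mathcomp Require Import ring lra zify.
Require Import Defs.
Import Order.TTheory GRing.Theory Num.Theory numFieldNormedType.Exports.
Local Open Scope ring_scope.

Lemma lambert_ex (R : realType) (X : R) :
  - (expR 1)^-1 < X -> X < 0 -> exists w : R, w <= -1 /\ w * expR w = X.
Proof.
move=> hX1 hX0.
have e1 : 1 < expR (1:R) by rewrite expR_gt1.
have ei : (expR (1:R))^-1 < 1 by rewrite invf_lt1 // (lt_trans _ e1).
set p := - X.
have p0 : 0 < p by rewrite /p oppr_gt0.
have p1 : p < 1 by rewrite /p; lra.
set y := 4 / p.
have y4 : 4 < y.
  by rewrite /y ltr_pdivlMr //; nra.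
have hy : y * expR (- y) <= p.
  have h2 : 1 + y / 2 <= expR (y / 2) by apply: expR_ge1Dx.
  have hE : expR y = expR (y/2) * expR (y/2) by rewrite -expRD; congr expR; field.
  have hEy : y * y / 4 <= expR y.
    rewrite hE. have : 0 <= 1 + y/2 by lra. nra.
  rewrite expRN ler_pdivrMr ?expR_gt0 //.
  apply: le_trans _ (ler_wpM2l (ltW p0) hEy).
  rewrite /y. have pn : p != 0 by rewrite gt_eqF.
  rewrite le_eqVlt; apply/orP; left; apply/eqP. field. by [].
have cf : continuous (fun w : R => w * expR w).
  move=> x; apply: (@continuousM R R id expR x); first exact: cvg_id.
  exact: continuous_expR.
have hm1 : -1 * expR (-1) <= X by rewrite expRN mulN1r; lra.
have hm2 : X <= - y * expR (- y) by rewrite mulNr /p in hy *; lra.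
have hab : - y <= -1 by lra.
have hv : Num.min (- y * expR (- y)) (-1 * expR (-1)) <= X <= Num.max (- y * expR (- y)) (-1 * expR (-1)).
  by rewrite ge_min le_max hm2 hm1 orbT.
have [c] := @IVT R (fun w => w * expR w) (- y) (-1) X hab (continuous_subspaceT cf) hv.
rewrite in_itv /= => /andP [_ h] hc. by exists c.
Qed.

Lemma dec_core (R : realType) (l s t t0 Gs Gt G0 : R) : l < 0 -> 0 < t0 -> t0 <= s -> s < t ->
  0 < Gs -> G0 * (1 - l * t0) = 1 -> Gs * (1 + (t0 - s) * l) <= G0 ->
  Gs * (1 + (t - s) * l) < Gt -> (1 - Gt) / t < (1 - Gs) / s.
Proof.
move=> l0 t00 hs hst Gs0 hG0 tan1 tan2.
have s0 : 0 < s by lra.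
have t0' : 0 < t by lra.
have h1 : Gs * (1 - l * s) <= 1.
  have a1 : 0 < 1 - l * t0 by nra.
  have := ler_wpM2r (ltW a1) tan1.
  have : Gs * (1 - l * s) <= Gs * (1 + (t0 - s) * l) * (1 - l * t0).
    rewrite -mulrA; apply: ler_wpM2l; first exact: ltW.
    have : 0 <= (s - t0) * (l * l * t0).
      apply: mulr_ge0; first lra. apply: mulr_ge0 => //; nra.
    nra.
  move=> A B; rewrite hG0 in B; exact: le_trans A B.
rewrite ltr_pdivrMr // mulrAC ltr_pdivlMr //.
have : s * (1 - Gt) < s * (1 - Gs - Gs * (t - s) * l) by rewrite ltr_pM2l //; lra.
have : 0 <= (t - s) * (1 - Gs * (1 - l * s)) by apply: mulr_ge0; lra.
move=> A B; nra.
Qed.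

Lemma inc_core (R : realType) (l s t t0 Gs Gt G0 : R) : l < 0 -> 0 < s -> s < t -> t <= t0 ->
  0 < G0 -> G0 * (1 - l * t0) = 1 -> G0 * (1 + (t - t0) * l) <= Gt ->
  Gt * (1 + (s - t) * l) < Gs -> (1 - Gs) / s < (1 - Gt) / t.
Proof.
move=> l0 s0 hst ht G00 hG0 tan1 tan2.
have t0' : 0 < t by lra.
have h1 : 1 <= Gt * (1 - l * t).
  have a1 : 0 < 1 - l * t by nra.
  have := ler_wpM2r (ltW a1) tan1.
  have : G0 * (1 - l * t0) <= G0 * (1 + (t - t0) * l) * (1 - l * t).
    rewrite -mulrA; apply: ler_wpM2l; first exact: ltW.
    have : 0 <= (t0 - t) * (l * l * t).
      apply: mulr_ge0; first lra. apply: mulr_ge0 => //; nra.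
    nra.
  move=> A B; rewrite hG0 in A; exact: le_trans A B.
rewrite ltr_pdivrMr // mulrAC ltr_pdivlMr //.
have : t * (1 - Gs) < t * (1 - Gt - Gt * (s - t) * l) by rewrite ltr_pM2l //; lra.
have : 0 <= (t - s) * (Gt * (1 - l * t) - 1) by apply: mulr_ge0; lra.
move=> A B; nra.
Qed.

Lemma int_part (fl ce : int) (g nf nc : nat) : 1 <= fl -> (ce = fl \/ ce = fl + 1) ->
  nf%:Z = fl -> nc%:Z = ce -> (nf <= g)%N -> (g <= nc)%N -> g%:Z = fl \/ g%:Z = ce.
Proof. move=> *; lia. Qed.

Theorem theorem2 (R : realType) (alpha b c : R)
  (halpha0 : 0 < alpha) (halpha1 : alpha < 1) (hb : 0 < b) (hc : 0 < c)
  (hL : b + c < 1) (gstar : nat) (hg1 : (1 <= gstar)%N)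
  (hmax : forall g : nat, (1 <= g)%N -> S_inf alpha (b + c) g <= S_inf alpha (b + c) gstar) :
  if 1 < gamma0 alpha (b + c)
  then (gstar%:Z = Num.floor (gamma0 alpha (b + c)) \/
        gstar%:Z = Num.ceil (gamma0 alpha (b + c)))
  else gstar = 1%N.
Proof.
set L := b + c in hL hmax *.
have L0 : 0 < L by rewrite /L; lra.
set iL := L^-1.
have iLL : L * iL = 1 by rewrite /iL mulfV // gt_eqF.
have iL1 : 1 < iL by rewrite /iL invf_gt1.
set l := ln alpha.
have l0 : l < 0 by apply: ln_lt0; rewrite halpha0 halpha1.
set G := fun t : R => expR ((t - iL + 1) * l).
have G0 : forall t, 0 < G t by move=> t; exact: expR_gt0.
have Gtan : forall u v, G v * (1 + (u - v) * l) <= G u.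
  move=> u v; rewrite /G.
  have -> : (u - iL + 1) * l = (v - iL + 1) * l + (u - v) * l by ring.
  rewrite expRD ler_wpM2l ?expR_ge1Dx //; exact: ltW.
have Gtans : forall u v, u != v -> G v * (1 + (u - v) * l) < G u.
  move=> u v uv; rewrite /G.
  have -> : (u - iL + 1) * l = (v - iL + 1) * l + (u - v) * l by ring.
  rewrite expRD ltr_pM2l ?expR_gt0 //; apply: expR_gt1Dx.
  rewrite mulf_neq0 ?subr_eq0 //; by rewrite lt_eqF.
set psi := fun t : R => (1 - G t) / t.
have Spsi : forall g : nat, S_inf alpha L g = psi (g%:R + iL) / (L * (1 - alpha)).
  move=> g; rewrite /S_inf /psi /G.
  have -> : alpha ^+ g.+1 = expR ((g%:R + iL - iL + 1) * l).
    have -> : (g%:R + iL - iL + 1) * l = ln (alpha ^+ g.+1).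
      by rewrite lnXn // -[RHS]mulr_natr -addn1 natrD /l; ring.
    by rewrite lnK // posrE exprn_gt0.
  have h1 : 1 - alpha != 0 by rewrite subr_eq0 gt_eqF.
  have h2 : g%:R + iL != 0 by apply: lt0r_neq0; apply: ltr_wpDl => //; lra.
  rewrite -[1 + g%:R * L](_ : L * (g%:R + iL) = _); last by rewrite mulrDr iLL; ring.
  field; rewrite h1 h2 gt_eqF //.
have hmax' : forall g : nat, (1 <= g)%N -> psi (g%:R + iL) <= psi (gstar%:R + iL).
  move=> g /hmax; rewrite !Spsi ler_pM2r //.
  by rewrite invr_gt0 mulr_gt0 // subr_gt0.
set X := - (expR 1)^-1 * alpha `^ (iL - 1).
have pw : alpha `^ (iL - 1) = expR ((iL - 1) * l).
  by rewrite -[LHS]lnK ?posrE ?powR_gt0 // ln_powR.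
have pw1 : alpha `^ (iL - 1) < 1.
  rewrite pw expR_lt1; nra.
have pw0 : 0 < alpha `^ (iL - 1) by apply: powR_gt0.
have ei0 : 0 < (expR (1:R))^-1 by rewrite invr_gt0 expR_gt0.
have hX1 : - (expR 1)^-1 < X.
  rewrite /X mulNr ltrN2 -[X in _ < X]mulr1 ltr_pM2l //.
have hX0 : X < 0 by rewrite /X mulNr oppr_lt0 mulr_gt0.
have exw := @lambert_ex R X hX1 hX0.
have [hw1 hwX] : LambertWm1 X <= -1 /\ LambertWm1 X * expR (LambertWm1 X) = X :=
  xgetPex 0 exw.
set w := LambertWm1 X in hw1 hwX.
have hw : w < -1.
  rewrite lt_neqAle hw1 andbT; apply/eqP => ew.
  move: hwX; rewrite ew expRN mulN1r => ex; lra.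
set t0 := (w + 1) / l.
have t00 : 0 < t0 by rewrite /t0 ltr_ndivlMr // mul0r; lra.
have ex0 : gamma0 alpha L = t0 - iL by [].
have crit : G t0 * (1 - l * t0) = 1.
  have e1 : 1 - l * t0 = - w by rewrite /t0; field; rewrite lt_eqF.
  have e2 : (t0 - iL + 1) * l = w + (1 + (- ((iL - 1) * l))).
    by rewrite /t0; field; rewrite lt_eqF.
  rewrite e1 /G e2 !expRD expRN -pw.
  have : - w * expR w = (expR 1)^-1 * alpha `^ (iL - 1) by rewrite mulNr hwX /X mulNr opprK.
  move=> h; rewrite mulrC !mulrA h.
  field; by rewrite !gt_eqF ?expR_gt0.
have dec : forall s t, t0 <= s -> s < t -> psi t < psi s.
  move=> s t h1 h2.
  exact: (@dec_core R l s t t0 (G s) (G t) (G t0) l0 t00 h1 h2 (G0 s) crit (Gtan t0 s) (Gtans t s (negbT (gt_eqF h2)))).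
have inc : forall s t, 0 < s -> s < t -> t <= t0 -> psi s < psi t.
  move=> s t h1 h2 h3.
  exact: (@inc_core R l s t t0 (G s) (G t) (G t0) l0 h1 h2 h3 (G0 t0) crit (Gtan t t0) (Gtans s t (negbT (lt_eqF h2)))).
have natpos : forall n : nat, 0 < n%:R + iL by move=> n; apply: ltr_wpDl => //; lra.
rewrite ex0; case: ifP => hx.
- set fl := Num.floor (t0 - iL).
  set ce := Num.ceil (t0 - iL).
  have fl1 : 1 <= fl by rewrite /fl floor_ge_int; apply: ltW.
  have hcf : ce = fl \/ ce = fl + 1.
    rewrite /ce ceil_floor -/fl; case: (t0 - iL \isn't a Num.int) => /=; [by right | by left; rewrite addr0].
  set nf := `|fl|%N.
  set nc := `|ce|%N.
  have fl0 : 0 <= fl by apply: le_trans fl1.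
  have ce0 : 0 <= ce by case: hcf => ->; [|apply: addr_ge0].
  have efl : nf%:Z = fl by rewrite /nf gez0_abs.
  have ece : nc%:Z = ce by rewrite /nc gez0_abs.
  have rfl : (nf%:R : R) <= t0 - iL.
    by have := floor_le (t0 - iL); rewrite -/fl -efl -pmulrn.
  have rce : t0 - iL <= (nc%:R : R).
    by have := ceil_ge (t0 - iL); rewrite -/ce -ece -pmulrn.
  have nf1 : (1 <= nf)%N by move: fl1; rewrite -efl lez_nat.
  have ce1 : 1 <= ce by case: hcf => -> //; apply: le_trans fl1 _; rewrite lerDl.
  have nc1 : (1 <= nc)%N by move: ce1; rewrite -ece lez_nat.
  have h1 : (nf <= gstar)%N.
    rewrite leqNgt; apply/negP => hlt.
    have := hmax' nf nf1.
    have : psi (gstar%:R + iL) < psi (nf%:R + iL).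
      apply: inc => //; last lra.
      by rewrite ltrD2r ltr_nat.
    move=> A B; have := lt_le_trans A B; by rewrite ltxx.
  have h2 : (gstar <= nc)%N.
    rewrite leqNgt; apply/negP => hlt.
    have := hmax' nc nc1.
    have : psi (gstar%:R + iL) < psi (nc%:R + iL).
      apply: dec; first lra.
      by rewrite ltrD2r ltr_nat.
    move=> A B; have := lt_le_trans A B; by rewrite ltxx.
  exact: int_part fl1 hcf efl ece h1 h2.
- apply/eqP; rewrite eqn_leq hg1 andbT leqNgt; apply/negP => hlt.
  have := hmax' 1%N (leqnn 1).
  have : psi (gstar%:R + iL) < psi (1%:R + iL).
    apply: dec; first by move/negbT: hx; rewrite -leNgt; lra.
    by rewrite ltrD2r ltr_nat.
  move=> A B; have := lt_le_trans A B; by rewrite ltxx.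
Qed.
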